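(* Let $|\cdot|:\mathbb{Q}\to R$ be a non-archimedean multiplicative generalized seminorm on $\mathbb{Q}$ with trivial kernel. Then $|\cdot|$ is equivalent either to the $p$-adic valuation $|\cdot|_p:\mathbb{Q}\to R_{p^{\mathbb{Z}}}$ for some prime number $p$, or to the trivial valuation $|\cdot|_0:\mathbb{Q}\to\{0,1\}$.
   Context: A halo is a commutative unital semiring with a partial order compatible with $+$ and $\cdot$; an aura is a halo whose semiring is a semifield; positive means $0<1$. A generalized seminorm on a ring $A$ is a map $|\cdot|:A\to R$ into a positive totally ordered aura with $|0|=0,|1|=1$, $|a+b|\le|a|+|b|$, $|ab|\le|a||b|$; multiplicative if $|ab|=|a||b|$; non-archimedean if $|a+b|\le\max(|a|,|b|)$. Two seminorms $|\cdot|_1,|\cdot|_2$ on $A$ are equivalent if for all $a,b\in A$: $|a|_1\le|b|_1\iff|a|_2\le|b|_2$. For a totally ordered multiplicative group $\Gamma$, $R_\Gamma=\{0\}\cup\Gamma$ with $0$ smallest and absorbing and addition $\max$. $R_{p^{\mathbb{Z}}}$ uses $\Gamma=p^{\mathbb{Z}}\subset\mathbb{Q}_{>0}$ with its usual order, $|x|_p=p^{-\mathrm{ord}_p(x)}$ for $x\neq0$; $\{0,1\}=R_{\{1\}}$ and $|x|_0=1$ for $x\neq0$, $|0|_0=0$. *)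

(* Defs.v *)
From HB Require Import structures.
From mathcomp Require Import all_boot all_order all_algebra.
Set Implicit Arguments. Unset Strict Implicit. Unset Printing Implicit Defensive.
Import Order.TTheory GRing.Theory Num.Theory.
Local Open Scope ring_scope.

Definition halo_order (R : comNzSemiRingType) (le : rel R) : Prop :=
  [/\ (forall x, le x x),
      (forall x y, le x y -> le y x -> x = y),
      (forall x y z, le x y -> le y z -> le x z),
      (forall x y z, le x y -> le (x + z) (y + z)) &
      (forall x y z, le x y -> le (x * z) (y * z))].

Definition is_semifield (R : comNzSemiRingType) : Prop :=
  forall x : R, x != 0 -> exists y : R, x * y = 1.

Definition pos_tot_aura (R : comNzSemiRingType) (le : rel R) : Prop :=
  [/\ halo_order le, is_semifield R,
      (le 0 1 /\ (0 : R) != 1) &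
      (forall x y, le x y \/ le y x)].

Definition maxR (R : Type) (le : rel R) (x y : R) : R := if le x y then y else x.

Definition gen_seminorm (R : comNzSemiRingType) (le : rel R) (f : rat -> R) : Prop :=
  [/\ f 0 = 0, f 1 = 1,
      (forall a b, le (f (a + b)) (f a + f b)) &
      (forall a b, le (f (a * b)) (f a * f b))].

Definition sn_multiplicative (R : comNzSemiRingType) (f : rat -> R) : Prop :=
  forall a b, f (a * b) = f a * f b.

Definition non_archimedean (R : comNzSemiRingType) (le : rel R) (f : rat -> R) : Prop :=
  forall a b, le (f (a + b)) (maxR le (f a) (f b)).

Definition seminorm_equiv (R1 R2 : Type) (le1 : rel R1) (le2 : rel R2)
  (f1 : rat -> R1) (f2 : rat -> R2) : Prop :=
  forall a b : rat, le1 (f1 a) (f1 b) <-> le2 (f2 a) (f2 b).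

(* p-adic absolute value |x|_p = p^{-ord_p x}, with values in
   R_{p^Z} = {0} ∪ p^Z, realised inside rat (same order as R_{p^Z}). *)
Definition ord_p (p : nat) (x : rat) : int :=
  (logn p `|numq x|)%:Z - (logn p `|denq x|)%:Z.

Definition padic_abs (p : nat) (x : rat) : rat :=
  if x == 0 then 0 else (p%:R : rat) ^ (- ord_p p x).

(* trivial valuation |x|_0 with values in {0,1} (realised in rat, 0 < 1) *)
Definition triv_abs (x : rat) : rat := if x == 0 then 0 else 1.

(* Main.v *)
Require Import Defs.
From mathcomp Require Import all_boot all_order all_algebra.
Import Order.TTheory GRing.Theory Num.Theory.
Local Open Scope ring_scope.
From mathcomp Require Import zify.
From Stdlib Require Import Classical.
Set Implicit Arguments. Unset Strict Implicit.

Lemma h_refl (R : comNzSemiRingType) (le : rel R) (HR : pos_tot_aura le) x : le x x.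
Proof. move: HR => [[H _ _ _ _] _ _ _]; exact: H. Qed.
Lemma h_anti (R : comNzSemiRingType) (le : rel R) (HR : pos_tot_aura le) x y :
  le x y -> le y x -> x = y.
Proof. move: HR => [[_ H _ _ _] _ _ _]; exact: H. Qed.
Lemma h_trans (R : comNzSemiRingType) (le : rel R) (HR : pos_tot_aura le) x y z :
  le x y -> le y z -> le x z.
Proof. move: HR => [[_ _ H _ _] _ _ _]; exact: H. Qed.
Lemma h_mulr (R : comNzSemiRingType) (le : rel R) (HR : pos_tot_aura le) x y z :
  le x y -> le (x * z) (y * z).
Proof. move: HR => [[_ _ _ _ H] _ _ _]; exact: H. Qed.
Lemma h_total (R : comNzSemiRingType) (le : rel R) (HR : pos_tot_aura le) x y :
  le x y \/ le y x.
Proof. by case: HR => _ _ _ H; apply: H. Qed.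
Lemma h_01 (R : comNzSemiRingType) (le : rel R) (HR : pos_tot_aura le) : le 0 1.
Proof. by case: HR => _ _ [H _]. Qed.
Lemma h_n01 (R : comNzSemiRingType) (le : rel R) (HR : pos_tot_aura le) : (0:R) != 1.
Proof. by case: HR => _ _ [_ H]. Qed.
Lemma h_n10 (R : comNzSemiRingType) (le : rel R) (HR : pos_tot_aura le) : ~ le 1 0.
Proof. move=> H; move: (h_n01 HR); by rewrite (h_anti HR (h_01 HR) H) eqxx. Qed.
Lemma h_ge0 (R : comNzSemiRingType) (le : rel R) (HR : pos_tot_aura le) x : le 0 x.
Proof. by have := @h_mulr _ _ HR _ _ x (h_01 HR); rewrite mul0r mul1r. Qed.
Lemma h_mull (R : comNzSemiRingType) (le : rel R) (HR : pos_tot_aura le) x y z :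
  le x y -> le (z * x) (z * y).
Proof. by rewrite ![z * _]mulrC; apply: h_mulr. Qed.
Lemma h_cancel (R : comNzSemiRingType) (le : rel R) (HR : pos_tot_aura le) x y z :
  z != 0 -> le (x * z) (y * z) -> le x y.
Proof.
move: HR => [Ho Hsf Hp Ht] /Hsf [w Hw] H; have HR : pos_tot_aura le by [].
by have := @h_mulr _ _ HR _ _ w H; rewrite -!mulrA Hw !mulr1.
Qed.
Lemma h_mul_neq0 (R : comNzSemiRingType) (le : rel R) (HR : pos_tot_aura le) (x y : R) :
  x != 0 -> y != 0 -> x * y != 0.
Proof.
move: HR => [Ho Hsf Hp Ht] Hx /Hsf [w Hw]; apply: contraNneq Hx => H.
by rewrite -(mulr1 x) -Hw mulrA H mul0r.
Qed.
Lemma h_mul_le1 (R : comNzSemiRingType) (le : rel R) (HR : pos_tot_aura le) a b :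
  le a 1 -> le b 1 -> le (a * b) 1.
Proof. move=> Ha Hb; apply: (h_trans HR) Hb; by have := @h_mulr _ _ HR _ _ b Ha; rewrite mul1r. Qed.
Lemma h_mul_lt1 (R : comNzSemiRingType) (le : rel R) (HR : pos_tot_aura le) a b :
  le a 1 -> ~ le 1 b -> ~ le 1 (a * b).
Proof. move=> Ha Hb H; apply: Hb; apply: (@h_trans _ _ HR _ (a*b)) => //; by have := @h_mulr _ _ HR _ _ b Ha; rewrite mul1r. Qed.
Lemma h_sq1 (R : comNzSemiRingType) (le : rel R) (HR : pos_tot_aura le) (a : R) :
  a * a = 1 -> a = 1.
Proof.
move=> H; case: (@h_total _ _ HR a 1) => Ha.
- apply: (h_anti HR Ha); by have := @h_mulr _ _ HR _ _ a Ha; rewrite H mul1r.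
- apply: (h_anti HR _ Ha); by have := @h_mulr _ _ HR _ _ a Ha; rewrite H mul1r.
Qed.
Lemma h_max (R : comNzSemiRingType) (le : rel R) x y : maxR le x y = x \/ maxR le x y = y.
Proof. rewrite /maxR; case: ifP; auto. Qed.
Lemma h_max_le1 (R : comNzSemiRingType) (le : rel R) x y :
  le x 1 -> le y 1 -> le (maxR le x y) 1.
Proof. by move=> ? ?; case: (@h_max _ le x y) => ->. Qed.
Lemma h_max_lt1 (R : comNzSemiRingType) (le : rel R) x y :
  ~ le 1 x -> ~ le 1 y -> ~ le 1 (maxR le x y).
Proof. by move=> ? ?; case: (@h_max _ le x y) => ->. Qed.
Lemma h_pow_le1 (R : comNzSemiRingType) (le : rel R) (HR : pos_tot_aura le) (c : R) k :
  le c 1 -> le (c ^+ k) 1.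
Proof. move=> Hc; elim: k => [|k IH]; first exact: h_refl. by rewrite exprS; apply: h_mul_le1. Qed.

Lemma h_powcmp (R : comNzSemiRingType) (le : rel R) (HR : pos_tot_aura le) (c : R) (m n : nat) :
  c != 0 -> le c 1 -> ~ le 1 c -> le (c ^+ m) (c ^+ n) <-> (n <= m)%N.
Proof.
move=> c0 c1 c1'; split => H.
- rewrite leqNgt; apply/negP => Hmn.
  have cm0 : c ^+ m != 0.
    elim: (m) => [|k IH]; first by rewrite expr0 eq_sym (h_n01 HR).
    by rewrite exprS (h_mul_neq0 HR).
  move: H; rewrite -(subnKC (ltnW Hmn)) exprD -{1}(mulr1 (c ^+ m)) ![c ^+ m * _]mulrC.
  move/(h_cancel HR cm0).
  have -> : (n - m = (n - m).-1.+1)%N by lia.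
  rewrite exprSr; apply: h_mul_lt1 => //; exact: h_pow_le1.
- rewrite -(subnKC H) exprD -{2}(mulr1 (c ^+ n)); apply: h_mull => //; exact: h_pow_le1.
Qed.


Unset Implicit Arguments. Set Strict Implicit.

Theorem lemma3p9 (R : comNzSemiRingType) (le : rel R) (HR : pos_tot_aura le)
  (f : rat -> R) (Hsn : gen_seminorm le f) (Hmul : sn_multiplicative f)
  (Hna : non_archimedean le f) (Hker : forall x : rat, f x = 0 -> x = 0) :
  (exists p : nat, prime p /\
     seminorm_equiv le (fun x y : rat => x <= y) f (padic_abs p))
  \/ seminorm_equiv le (fun x y : rat => x <= y) f triv_abs.
Proof.
case: Hsn => f0 f1 _ _.
have fneq0 x : x != 0 -> f x != 0 by apply: contra_neq => /Hker.
have fN1 : f (-1) = 1 by apply: (h_sq1 HR); rewrite -Hmul mulrNN mulr1.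
have fN x : f (- x) = f x by rewrite -mulN1r Hmul fN1 mul1r.
have fnat n : le (f n%:R) 1.
  elim: n => [|n IH]; first by rewrite f0 (h_ge0 HR).
  rewrite -addn1 natrD; apply: (h_trans HR) (Hna _ _) _; apply: h_max_le1 => //.
  by rewrite f1 h_refl.
have fint (z : int) : f z%:~R = f (`|z|%N)%:R.
  by case: z => n //=; rewrite fN.
have fq x : f x * f (`|denq x|%N)%:R = f (`|numq x|%N)%:R.
  by rewrite -(fint (denq x)) -(fint (numq x)) -Hmul numqE.
have le11 : le 1 1 := h_refl HR 1.
case: (classic (exists n, (0 < n)%N && ~~ le 1 (f n%:R)))=> [exP|nexP]; last first.
  have fn1 n : (0 < n)%N -> f n%:R = 1.
    move=> n0; apply: (h_anti HR) (fnat n) _; apply/negPn/negP => H.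
    by apply: nexP; exists n; rewrite n0 H.
  have fx1 x : x != 0 -> f x = 1.
    move=> x0; have := fq x; rewrite !fn1 ?mulr1 //.
    - by rewrite absz_gt0 numq_eq0.
    - by rewrite absz_gt0 denq_eq0.
  right => a b; rewrite /triv_abs.
  have [->|a0] := eqVneq a 0; first by rewrite f0 (h_ge0 HR); split => // _; case: ifP.
  have [->|b0] := eqVneq b 0.
    rewrite f0 fx1 //; split => // H; exfalso; exact: (h_n10 HR H).
  by rewrite !fx1 //; split.
left.
case: (ex_minnP exP) => p /andP[p0 /negP fp1] pmin.
have p1 : (1 < p)%N.
  case: p p0 fp1 {pmin} => [|[|]] //; by rewrite f1.
have fsmall m : (0 < m)%N -> (m < p)%N -> f m%:R = 1.
  move=> m0 mp; apply: (h_anti HR) (fnat m) _; apply/negPn/negP => H.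
  by have := pmin m; rewrite m0 H => /(_ isT); rewrite leqNgt mp.
have pr : prime p.
  apply/primeP; split => // d dp; apply/negPn/negP => /norP[d1 dp'].
  have d0 : (0 < d)%N by apply: dvdn_gt0 dp; lia.
  have dle : (d <= p)%N := dvdn_leq (ltnW p1) dp.
  have E := divnK dp.
  set e := (p %/ d)%N in E.
  have e0 : (0 < e)%N by rewrite divn_gt0.
  have ep : (e < p)%N by rewrite /e ltn_Pdiv; lia.
  apply: fp1; rewrite -E natrM Hmul !fsmall ?mulr1 //; lia.
pose c := f p%:R.
have c0 : c != 0 by apply: fneq0; rewrite pnatr_eq0; lia.
have c1 : le c 1 := fnat p.
have key n : ~~ (p %| n)%N -> f n%:R = 1.
  move=> pn; apply: (h_anti HR) (fnat n) _; apply/negPn/negP => /negP Hn.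
  have n0 : (0 < n)%N by case: n pn {Hn} => //; rewrite dvdn0.
  case: (Bezoutl n (ltnW p1)) => a _.
  have := prime_coprime n pr; rewrite pn => /eqP ->.
  move=> /divnK; set k := (_ %/ p)%N => Ek.
  have : (1 : rat) = (k * p)%:R + - (a * n)%:R by rewrite Ek natrD addrK.
  move=> E1; have := Hna (k * p)%:R (- (a * n)%:R); rewrite -E1 f1 fN !natrM !Hmul.
  apply: h_max_lt1; apply: (h_mul_lt1 HR) => //; exact: fnat.
have fpow n : (0 < n)%N -> f n%:R = c ^+ logn p n.
  elim: n {-2}n (leqnn n) => [|N IH] n nN n0; first lia.
  rewrite lognE pr n0 /=.
  case: ifP => pn; last by rewrite key ?pn.
  have E := divnK pn.
  rewrite -{1}E natrM Hmul IH ?exprSr //.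
  all: try (have := ltn_Pdiv p1 n0; lia).
have fz (z : int) : z != 0 -> f (`|z|%N)%:R = c ^+ logn p `|z|.
  by move=> z0; rewrite fpow // absz_gt0.
have fqc x : x != 0 -> f x * c ^+ logn p `|denq x| = c ^+ logn p `|numq x|.
  move=> x0; by rewrite -fz ?denq_eq0 // -fz ?numq_eq0 // fq.
have cp0 k : c ^+ k != 0.
  elim: k => [|k IH]; first by rewrite expr0 eq_sym (h_n01 HR).
  by rewrite exprS (h_mul_neq0 HR).
exists p; split => // a b.
have pgt0 x : x != 0 -> (0 : rat) < padic_abs p x.
  move=> x0; rewrite /padic_abs (negbTE x0); apply: exprz_gt0; rewrite ltr0n; lia.
have [->|a0] := eqVneq a 0.
  rewrite f0 (h_ge0 HR) /padic_abs eqxx; split => // _; case: ifP => // _.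
  by apply: exprz_ge0; rewrite ler0n.
have [->|b0] := eqVneq b 0.
  rewrite f0 {2}/padic_abs eqxx; split => H; exfalso.
  - by move: (fneq0 a a0); rewrite (h_anti HR H (h_ge0 HR _)) eqxx.
  - by have := pgt0 a a0; rewrite ltNge H.
set A1 := logn p `|numq a|; set B1 := logn p `|denq a|.
set A2 := logn p `|numq b|; set B2 := logn p `|denq b|.
have Hl : le (f a) (f b) <-> le (c ^+ (A1 + B2)) (c ^+ (A2 + B1)).
  rewrite !exprD -(fqc a a0) -(fqc b b0) -!mulrA [c ^+ B2 * _]mulrC; split => H.
  - exact: h_mulr.
  - exact: (h_cancel HR (h_mul_neq0 HR (cp0 _) (cp0 _))) H.
rewrite Hl h_powcmp //.
rewrite /padic_abs (negbTE a0) (negbTE b0) /ord_p -/A1 -/B1 -/A2 -/B2.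
rewrite ler_eXz2l; last by rewrite ltr1n.
clear Hl; clearbody A1 B1 A2 B2; move: A1 B1 A2 B2 => A1 B1 A2 B2; clear.
by split => H; lia.
Qed.
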